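(* Suppose $\mathcal{F}=\{X;f_\lambda\mid\lambda\in\Lambda\}$ is a minimal IFS on an infinite compact metric space $X$ and $\mathcal{F}$ has some non-periodic regularly recurrent point. Then there exist a sequence $\alpha=(p_1,p_2,\dots)$ of prime numbers and a continuous surjective map $\pi:X\to\Delta_\alpha$ such that $g_\alpha\circ\pi=\pi\circ f_\lambda$ for all $\lambda\in\Lambda$. Moreover, $\pi^{-1}(\pi(x))=\{x\}$ for every regularly recurrent point $x\in X$.
   Context: $\Lambda$ is a finite nonempty set, $f_\lambda:X\to X$ continuous. $\Lambda^{\mathbb{Z}_+}$ is the set of sequences $\sigma=(\lambda_1,\lambda_2,\dots)$ in $\Lambda$, $\mathcal{F}_{\sigma_n}=f_{\lambda_n}\circ\cdots\circ f_{\lambda_1}$, $\mathcal{F}_{\sigma_0}=\mathrm{id}$. A nonempty closed $M\subseteq X$ is $\mathcal{F}^n$-minimal if $\mathcal{F}_{\sigma_n}(M)=M$ for all $\sigma$ and $\mathcal{F}_{\sigma_n}(A)\ne A$ for every nonempty proper $A\subsetneq M$ and every $\sigma$. $\mathcal{F}$ is minimal if the only $\mathcal{F}^1$-minimal set is $X$ (equivalently, every point has a dense set of iterates $f_{\lambda_k}\circ\cdots\circ f_{\lambda_1}(x)$, $k>0$). A point $x$ is regularly recurrent if for every neighborhood $U$ of $x$ there is $n\ge1$ with $\mathcal{F}_{\sigma_{ni}}(x)\in U$ for all $i\ge0$ and all $\sigma$. A point is periodic if some finite composition $f_{\lambda_n}\circ\cdots\circ f_{\lambda_1}$ fixes it.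 For $\alpha=(j_1,j_2,\dots)$ with integers $j_i\ge2$, $\Delta_\alpha$ is the set of sequences $(r_1,r_2,\dots)$ with $r_i\in\{0,\dots,j_i-1\}$, with metric $d_\alpha(r,s)=\sum_i\delta(r_i,s_i)/2^i$ ($\delta(a,b)=1$ if $a\ne b$, else $0$), and $g_\alpha:\Delta_\alpha\to\Delta_\alpha$ is the adding machine map $r\mapsto r+(1,0,0,\dots)$, addition being coordinatewise with carry (first coordinate mod $j_1$, carry into the second coordinate taken mod $j_2$, etc.). *)

(* Defs.v *)
From Stdlib Require Import Reals Lra Lia List Arith.
Open Scope R_scope.

Record is_metric {X : Type} (d : X -> X -> R) : Prop := {
  metric_nonneg : forall x y, 0 <= d x y;
  metric_eq0 : forall x y, d x y = 0 <-> x = y;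
  metric_sym : forall x y, d x y = d y x;
  metric_triangle : forall x y z, d x z <= d x y + d y z
}.

Definition is_open {X : Type} (d : X -> X -> R) (U : X -> Prop) : Prop :=
  forall x, U x -> exists eps, eps > 0 /\ forall y, d x y < eps -> U y.

Definition compact_space {X : Type} (d : X -> X -> R) : Prop :=
  forall (I : Type) (U : I -> X -> Prop),
    (forall i, is_open d (U i)) -> (forall x, exists i, U i x) ->
    exists l : list I, forall x, exists i, In i l /\ U i x.

Definition infinite_type (X : Type) : Prop :=
  ~ exists l : list X, forall x : X, In x l.

Definition finite_type (L : Type) : Prop :=
  exists l : list L, forall a : L, In a l.

Definition continuous_map {X Y : Type} (dX : X -> X -> R) (dY : Y -> Y -> R)
  (f : X -> Y) : Prop :=
  forall x eps, eps > 0 -> exists delta, delta > 0 /\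
    forall y, dX x y < delta -> dY (f x) (f y) < eps.

(** F_{sigma_n} = f_{lambda_n} o ... o f_{lambda_1}; here sigma 0 = lambda_1. *)
Fixpoint iterF {X L : Type} (f : L -> X -> X) (sigma : nat -> L) (n : nat) (x : X) : X :=
  match n with
  | O => x
  | S m => f (sigma m) (iterF f sigma m x)
  end.

Definition ifs_minimal {X L : Type} (d : X -> X -> R) (f : L -> X -> X) : Prop :=
  forall x y eps, eps > 0 ->
    exists (sigma : nat -> L) (k : nat), (k > 0)%nat /\ d (iterF f sigma k x) y < eps.

Definition regularly_recurrent {X L : Type} (d : X -> X -> R) (f : L -> X -> X) (x : X) : Prop :=
  forall eps, eps > 0 -> exists n : nat, (n >= 1)%nat /\
    forall (i : nat) (sigma : nat -> L), d (iterF f sigma (n * i) x) x < eps.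

Definition periodic_point {X L : Type} (f : L -> X -> X) (x : X) : Prop :=
  exists (sigma : nat -> L) (n : nat), (n >= 1)%nat /\ iterF f sigma n x = x.

(** Adding machine Delta_alpha: sequences r (indexed from 0) with r i < alpha i. *)
Definition in_Delta (alpha : nat -> nat) (r : nat -> nat) : Prop :=
  forall i, (r i < alpha i)%nat.

Definition delta_term (r s : nat -> nat) (i : nat) : R :=
  (if Nat.eqb (r i) (s i) then 0 else 1) / 2 ^ (S i).

Lemma delta_term_bound (r s : nat -> nat) (i : nat) :
  0 <= delta_term r s i <= 1 * (1/2) ^ i.
Proof.
  unfold delta_term.
  assert (H2 : 0 < 2 ^ S i) by (apply pow_lt; lra).
  assert (E : 1 * (1/2) ^ i = 2 / 2 ^ S i).
  { rewrite Rmult_1_l. unfold Rdiv. rewrite pow_mult_distr_l_depr || idtac.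
    simpl. rewrite Rinv_mult, <- Rmult_assoc, Rinv_r, Rmult_1_l by lra.
    rewrite <- pow_inv. rewrite Rmult_1_l. reflexivity. }
  rewrite E. destruct (Nat.eqb (r i) (s i)); split; unfold Rdiv;
    try apply Rmult_le_pos; try lra;
    try (left; apply Rinv_0_lt_compat; lra);
    apply Rmult_le_compat_r; try lra; left; apply Rinv_0_lt_compat; lra.
Qed.

Lemma geom_half_cv : { l : R | Un_cv (fun N => sum_f_R0 (fun n => 1 * (1/2) ^ n) N) l }.
Proof.
  exists (/ (1 - 1/2)). apply (GP_infinite (1/2)). rewrite Rabs_right; lra.
Qed.

(** d_alpha(r,s) = sum_i delta(r_i,s_i)/2^i (paper indexing from 1). *)
Definition d_alpha (r s : nat -> nat) : R :=
  proj1_sig (Rseries_CV_comp (delta_term r s) (fun n => 1 * (1/2) ^ n)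
    (delta_term_bound r s) geom_half_cv).

(** The adding machine map: add 1 to coordinate 0 with carry; coordinate i
    changes iff all earlier coordinates are maximal (alpha k - 1). *)
Definition g_alpha (alpha : nat -> nat) (r : nat -> nat) : nat -> nat :=
  fun i => if forallb (fun k => Nat.eqb (r k) (alpha k - 1)) (seq 0 i)
           then ((r i + 1) mod alpha i)%nat else r i.

Definition is_prime_nat (p : nat) : Prop := Znumtheory.prime (Z.of_nat p).

(* Main.v *)
Require Import Defs.
From Stdlib Require Import Reals List.
From Stdlib Require Import Lra Lia Arith ZArith Znumtheory ClassicalEpsilon Classical FunctionalExtensionality.
Open Scope R_scope.
Open Scope nat_scope.

Lemma mod_addc (a b c m : nat) : a mod m = b mod m -> (a + c) mod m = (b + c) mod m.
Proof. intro H. rewrite (Nat.Div0.add_mod a), (Nat.Div0.add_mod b), H. reflexivity. Qed.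

Lemma mod_cancel (a b c m : nat) : (a + c) mod m = (b + c) mod m -> a mod m = b mod m.
Proof.
  intro H. destruct m as [|m].
  - rewrite !Nat.mod_0_r in *. lia.
  - assert (E1 : a + c * S m = (a + c) + (c * S m - c)) by (rewrite Nat.mul_succ_r; lia).
    assert (E2 : b + c * S m = (b + c) + (c * S m - c)) by (rewrite Nat.mul_succ_r; lia).
    rewrite <- (Nat.Div0.mod_add a c), <- (Nat.Div0.mod_add b c), E1, E2.
    apply mod_addc. exact H.
Qed.

Lemma modmod_div (a m t : nat) : Nat.divide a m -> (t mod m) mod a = t mod a.
Proof.
  intros [q ->].
  rewrite (Nat.div_mod_eq t (q*a)) at 2.
  replace (q * a * (t / (q * a)) + t mod (q * a)) with (t mod (q*a) + (q * (t / (q*a))) * a) by nia.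
  rewrite Nat.Div0.mod_add. reflexivity.
Qed.

Lemma coarsen_mod (a m t k : nat) : Nat.divide a m -> t mod m = k mod m -> t mod a = k mod a.
Proof. intros Hd H. rewrite <- (modmod_div a m t), <- (modmod_div a m k), H by exact Hd. reflexivity. Qed.

Open Scope R_scope.
Lemma finite_min (m : nat) (P : nat -> R -> Prop) :
  (forall j e e', P j e -> 0 < e' <= e -> P j e') ->
  (forall j, (j < m)%nat -> exists e, e > 0 /\ P j e) ->
  exists e, e > 0 /\ forall j, (j < m)%nat -> P j e.
Proof.
  intros Hmon. induction m as [|m IH]; intros H.
  - exists 1. split; [lra|]. intros; lia.
  - destruct IH as [e1 [He1 H1]]. { intros j Hj. apply H. lia. }
    destruct (H m ltac:(lia)) as [e2 [He2 H2]].
    exists (Rmin e1 e2). split. { apply Rmin_glb_lt; lra. }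
    intros j Hj. destruct (Nat.eq_dec j m) as [->|Hne].
    + apply (Hmon m e2). exact H2. split. apply Rmin_glb_lt; lra. apply Rmin_r.
    + apply (Hmon j e1). apply H1. lia. split. apply Rmin_glb_lt; lra. apply Rmin_l.
Qed.

Lemma pigeon (m : nat) (Q : nat -> R -> Prop) :
  (forall j e e', Q j e -> e <= e' -> Q j e') ->
  (forall e, e > 0 -> exists j, (j < m)%nat /\ Q j e) ->
  exists j, (j < m)%nat /\ forall e, e > 0 -> Q j e.
Proof.
  intros Hmon H. apply NNPP. intro Hn.
  assert (Hall : forall j, (j < m)%nat -> exists e, e > 0 /\ ~ Q j e).
  { intros j Hj. apply NNPP. intro Hc. apply Hn. exists j. split; [exact Hj|].
    intros e He. apply NNPP. intro Hq. apply Hc. exists e. auto. }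
  destruct (finite_min m (fun j e => ~ Q j e)) as [e [He He']].
  - intros j e e' Hq [Hp Hle] Hq'. apply Hq. apply (Hmon j e'); auto.
  - exact Hall.
  - destruct (H e He) as [j [Hj Hq]]. apply (He' j Hj). exact Hq.
Qed.

Open Scope nat_scope.
Lemma ex_prime_div n : n >= 2 -> exists p, is_prime_nat p /\ Nat.divide p n.
Proof.
  induction n as [n IH] using (well_founded_induction lt_wf). intro Hn.
  destruct (prime_dec (Z.of_nat n)) as [Hp|Hp].
  - exists n. split. exact Hp. exists 1. lia.
  - destruct (not_prime_divide (Z.of_nat n) ltac:(lia) Hp) as [z [Hz [w Hw]]].
    assert (Hw0 : (0 <= w)%Z) by nia.
    destruct (IH (Z.to_nat z) ltac:(lia) ltac:(lia)) as [p [Hpp Hpd]].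
    exists p. split; auto. eapply Nat.divide_trans; [exact Hpd|].
    exists (Z.to_nat w). nia.
Qed.

Lemma prime_ge2 p : is_prime_nat p -> p >= 2.
Proof. intro H. apply prime_ge_2 in H. lia. Qed.

Fixpoint Mp (alpha : nat -> nat) (N : nat) : nat :=
  match N with 0 => 1 | S N => Mp alpha N * alpha N end.

Lemma Mp_pos alpha N : (forall i, alpha i >= 1) -> Mp alpha N >= 1.
Proof. intro H. induction N; simpl; auto. specialize (H N). nia. Qed.

Section Odo.
Variables (alpha : nat -> nat) (K : nat -> nat).
Hypothesis Ha : forall i, alpha i >= 2.
Hypothesis HK : forall N, K N < Mp alpha N.
Hypothesis Hc : forall N, K N = K (S N) mod Mp alpha N.

Let r i := K (S i) / Mp alpha i.

Lemma K_dec i : K (S i) = r i * Mp alpha i + K i.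
Proof.
  unfold r. rewrite (Hc i). pose proof (Nat.div_mod_eq (K (S i)) (Mp alpha i)). lia.
Qed.

Lemma r_lt i : r i < alpha i.
Proof.
  unfold r. apply Nat.Div0.div_lt_upper_bound. pose proof (HK (S i)). simpl in H. lia.
Qed.

Lemma allmax i : (forall j, j < i -> r j = alpha j - 1) <-> K i = Mp alpha i - 1.
Proof.
  induction i as [|i IH].
  - simpl. pose proof (HK 0). simpl in H. split; intros; lia.
  - pose proof (K_dec i) as E. pose proof (r_lt i). pose proof (HK i).
    pose proof (Ha i). pose proof (Mp_pos alpha i ltac:(intro j; specialize (Ha j); lia)).
    simpl Mp. split.
    + intro H'. assert (HH1 : K i = Mp alpha i - 1) by (apply IH; intros; apply H'; lia).
      assert (HH2 : r i = alpha i - 1) by (apply H'; lia).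
      rewrite E, HH1, HH2. destruct (alpha i) as [|a]; [lia|]. destruct (Mp alpha i) as [|mm]; [lia|].
      nia.
    + intro H'. assert (HH2 : r i = alpha i - 1).
      { destruct (Nat.eq_dec (r i) (alpha i - 1)); auto. exfalso.
        assert (r i <= alpha i - 2) by lia.
        assert (r i * Mp alpha i <= (alpha i - 2) * Mp alpha i) by (apply Nat.mul_le_mono_r; lia).
        destruct (alpha i) as [|a]; [lia|]. destruct a as [|a]; [lia|].
        replace (S (S a) - 2) with a in * by lia. nia. }
      assert (HH1 : K i = Mp alpha i - 1).
      { rewrite HH2 in E. destruct (alpha i) as [|a]; [lia|]. destruct (Mp alpha i) as [|mm]; [lia|].
        nia. }
      intros j Hj. destruct (Nat.eq_dec j i) as [->|]; auto. apply IH; auto. lia.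
Qed.

Lemma odo_step i (K' : nat -> nat) (HK' : forall N, K' N = (K N + 1) mod Mp alpha N) :
  g_alpha alpha r i = K' (S i) / Mp alpha i.
Proof.
  unfold g_alpha. rewrite HK'.
  pose proof (K_dec i) as E. pose proof (r_lt i). pose proof (HK i).
  pose proof (Ha i). pose proof (Mp_pos alpha i ltac:(intro j; specialize (Ha j); lia)).
  simpl Mp.
  destruct (forallb (fun k => Nat.eqb (r k) (alpha k - 1)) (seq 0 i)) eqn:Hf.
  - assert (Hall : forall j, j < i -> r j = alpha j - 1).
    { intros j Hj. rewrite forallb_forall in Hf. apply Nat.eqb_eq. apply Hf. apply in_seq. lia. }
    apply allmax in Hall.
    assert (E2 : K (S i) + 1 = (r i + 1) * Mp alpha i) by lia.
    rewrite E2. destruct (Nat.eq_dec (r i + 1) (alpha i)) as [Eq|Neq].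
    + rewrite Eq, Nat.Div0.mod_same. rewrite (Nat.mul_comm (alpha i) (Mp alpha i)), Nat.Div0.mod_same. rewrite Nat.Div0.div_0_l. reflexivity.
    + rewrite (Nat.mod_small (r i + 1)) by lia. rewrite (Nat.mod_small) by nia.
      rewrite Nat.div_mul by lia. reflexivity.
  - assert (Hn : K i <> Mp alpha i - 1).
    { intro Hk. pose proof (proj2 (allmax i) Hk) as Hk2. assert (forallb (fun k => Nat.eqb (r k) (alpha k - 1)) (seq 0 i) = true).
      { apply forallb_forall. intros j Hj. apply in_seq in Hj. apply Nat.eqb_eq. apply Hk2. lia. }
      congruence. }
    rewrite E. replace (r i * Mp alpha i + K i + 1) with (r i * Mp alpha i + (K i + 1)) by lia.
    rewrite Nat.mod_small.
    + rewrite Nat.div_add_l by lia. rewrite Nat.div_small by lia. lia.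
    + assert (r i * Mp alpha i <= (alpha i - 1) * Mp alpha i) by (apply Nat.mul_le_mono_r; lia).
      destruct (alpha i) as [|a]; [lia|]. replace (S a - 1) with a in * by lia. nia.
Qed.
End Odo.

Open Scope R_scope.

Lemma lim_le (u : nat -> R) l B : Un_cv u l -> (forall n, u n <= B) -> l <= B.
Proof.
  intros Hu Hb. apply Rnot_lt_le. intro Hlt.
  destruct (Hu (l - B) ltac:(lra)) as [n Hn]. specialize (Hn n (Nat.le_refl n)).
  specialize (Hb n). unfold R_dist in Hn. apply Rabs_def2 in Hn. lra.
Qed.

Lemma half_pow_pos n : 0 < (1/2)^n.
Proof. apply pow_lt. lra. Qed.

Lemma half_pow_mono N K : (N <= K)%nat -> (1/2)^K <= (1/2)^N.
Proof.
  intro H. replace K with (N + (K - N))%nat by lia. induction (K - N)%nat as [|j IH].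
  - rewrite Nat.add_0_r. lra.
  - rewrite Nat.add_succ_r. simpl. pose proof (half_pow_pos (N + j)). lra.
Qed.

Lemma delta_le r s i : delta_term r s i <= (1/2)^(S i).
Proof.
  unfold delta_term. replace ((1/2)^(S i)) with (1 / 2^(S i)).
  - assert (0 < 2^(S i)) by (apply pow_lt; lra).
    destruct (Nat.eqb (r i) (s i)); unfold Rdiv; apply Rmult_le_compat_r;
      try (left; apply Rinv_0_lt_compat; lra); lra.
  - unfold Rdiv. rewrite !Rmult_1_l. rewrite pow_inv. reflexivity.
Qed.

Lemma delta_zero r s i : r i = s i -> delta_term r s i = 0.
Proof. intro H. unfold delta_term. rewrite H, Nat.eqb_refl. unfold Rdiv. ring. Qed.

Lemma psum_bound r s N : (forall i, (i < N)%nat -> r i = s i) ->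
  forall K, sum_f_R0 (delta_term r s) K <= Rmax 0 ((1/2)^N - (1/2)^(S K)).
Proof.
  intros H K. induction K as [|K IH].
  - simpl. destruct N as [|N].
    + simpl. pose proof (delta_le r s 0). simpl in H0. eapply Rle_trans; [exact H0|].
      eapply Rle_trans; [|apply Rmax_r]. lra.
    + rewrite delta_zero by (apply H; lia). apply Rmax_l.
  - simpl sum_f_R0. destruct (Nat.lt_ge_cases (S K) N) as [Hl|Hg].
    + rewrite delta_zero by (apply H; lia). rewrite Rplus_0_r.
      eapply Rle_trans; [exact IH|]. apply Rle_max_compat_l.
      pose proof (half_pow_mono (S K) (S (S K)) ltac:(lia)). lra.
    + pose proof (delta_le r s (S K)) as Ht.
      pose proof (half_pow_mono N (S K) Hg) as Hm.
      rewrite Rmax_right in IH by lra.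
      eapply Rle_trans; [|apply Rmax_r].
      replace ((1/2)^(S (S K))) with ((1/2)^(S K) * (1/2)) in * by (simpl; ring). lra.
Qed.

Lemma dalpha_bound r s N : (forall i, (i < N)%nat -> r i = s i) -> d_alpha r s <= (1/2)^N.
Proof.
  intro H. unfold d_alpha.
  destruct (Rseries_CV_comp (delta_term r s) (fun n => 1 * (1/2)^n) (delta_term_bound r s) geom_half_cv) as [l Hl].
  simpl. apply (lim_le _ _ _ Hl). intro K. eapply Rle_trans; [apply (psum_bound r s N H K)|].
  apply Rmax_lub. apply Rlt_le, half_pow_pos. pose proof (half_pow_pos (S K)). lra.
Qed.

Lemma half_pow_small eps : eps > 0 -> exists N, (1/2)^N < eps.
Proof.
  intro He. destruct (pow_lt_1_zero (1/2) ltac:(rewrite Rabs_right; lra) eps He) as [N HN].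
  exists N. specialize (HN N (Nat.le_refl N)). rewrite Rabs_right in HN; auto.
  apply Rle_ge, Rlt_le, half_pow_pos.
Qed.

Section Dyn.
Variables (X L : Type) (d : X -> X -> R) (f : L -> X -> X).
Hypothesis Hd : is_metric d.
Hypothesis Hcont : forall lam, continuous_map d d (f lam).
Hypothesis Hmin : ifs_minimal d f.

Lemma dxx x : d x x = 0.
Proof. apply (metric_eq0 d Hd). reflexivity. Qed.
Lemma dsym x y : d x y = d y x.
Proof. apply (metric_sym d Hd). Qed.
Lemma dtri x y z : d x z <= d x y + d y z.
Proof. apply (metric_triangle d Hd). Qed.
Lemma dpos x y : 0 <= d x y.
Proof. apply (metric_nonneg d Hd). Qed.

Lemma iterF_ext (s1 s2 : nat -> L) n x :
  (forall i, (i < n)%nat -> s1 i = s2 i) -> iterF f s1 n x = iterF f s2 n x.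
Proof.
  induction n as [|n IH]; intro H; simpl; auto.
  rewrite H by lia. rewrite IH; auto.
Qed.

Definition Pb (b : X) (m k : nat) (y : X) : Prop :=
  forall eps, eps > 0 -> exists (sigma : nat -> L) (t : nat),
    (t mod m = k mod m)%nat /\ d (iterF f sigma t b) y < eps.

Lemma Pb_mod b m a c y : (a mod m = c mod m)%nat -> Pb b m a y -> Pb b m c y.
Proof.
  intros Hm H eps He. destruct (H eps He) as [s [t [Ht Hd']]].
  exists s, t. split; auto. congruence.
Qed.

Lemma Pb_iter b m k s t : (t mod m = k mod m)%nat -> Pb b m k (iterF f s t b).
Proof. intros Ht eps He. exists s, t. split; auto. rewrite dxx. lra. Qed.

Lemma Pb_closed b m k y :
  (forall eps, eps > 0 -> exists z, Pb b m k z /\ d z y < eps) -> Pb b m k y.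
Proof.
  intros H eps He. destruct (H (eps/2) ltac:(lra)) as [z [Hz Hzy]].
  destruct (Hz (eps/2) ltac:(lra)) as [s [t [Ht Hd']]].
  exists s, t. split; auto. pose proof (dtri (iterF f s t b) z y). lra.
Qed.

Lemma Pb_fwd1 b m k y lam : Pb b m k y -> Pb b m (S k) (f lam y).
Proof.
  intros H eps He.
  destruct (Hcont lam y eps He) as [del [Hdel Hc]].
  destruct (H del Hdel) as [s [t [Ht Hdt]]].
  exists (fun i => if Nat.ltb i t then s i else lam), (S t). split.
  - replace (S t) with (t + 1)%nat by lia. replace (S k) with (k + 1)%nat by lia.
    apply mod_addc. exact Ht.
  - simpl. rewrite Nat.ltb_irrefl.
    rewrite (iterF_ext _ s). 2:{ intros i Hi. apply Nat.ltb_lt in Hi. rewrite Hi. reflexivity. }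
    rewrite dsym. apply Hc. rewrite dsym. exact Hdt.
Qed.

Lemma Pb_fwd b m k y tau s : Pb b m k y -> Pb b m (k + s) (iterF f tau s y).
Proof.
  intro H. induction s as [|s IH]; simpl.
  - rewrite Nat.add_0_r. exact H.
  - replace (k + S s)%nat with (S (k + s)) by lia. apply Pb_fwd1. exact IH.
Qed.

Lemma Pb_trans b m a c k y : Pb b m a c -> Pb c m k y -> Pb b m (a + k) y.
Proof.
  intros Hac Hcy. apply Pb_closed. intros eps He.
  destruct (Hcy eps He) as [s [t [Ht Hdt]]].
  exists (iterF f s t c). split; auto.
  apply (Pb_mod _ _ (a + t)). { rewrite !(Nat.add_comm a). apply mod_addc. exact Ht. }
  apply Pb_fwd. exact Hac.
Qed.

Lemma Pb_cover b m y : (m >= 1)%nat -> exists k, (k < m)%nat /\ Pb b m k y.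
Proof.
  intro Hm.
  destruct (pigeon m (fun j e => exists (s : nat -> L) t, (t mod m = j)%nat /\ d (iterF f s t b) y < e))
    as [j [Hj Hq]].
  - intros j e e' [s [t [H1 H2]]] Hle. exists s, t. split; auto. lra.
  - intros e He. destruct (Hmin b y e He) as [s [t [_ Ht]]].
    exists (t mod m)%nat. split. apply Nat.mod_upper_bound. lia. exists s, t. auto.
  - exists j. split; auto. intros e He. destruct (Hq e He) as [s [t [H1 H2]]].
    exists s, t. split; auto. rewrite H1. rewrite Nat.mod_small; auto.
Qed.

Lemma Pb_coarsen b a m k y : Nat.divide a m -> Pb b m k y -> Pb b a k y.
Proof.
  intros Hdv H eps He. destruct (H eps He) as [s [t [Ht Hdt]]].
  exists s, t. split; auto. eapply coarsen_mod; eauto.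
Qed.

Definition goodb (b : X) (m : nat) : Prop :=
  (m >= 1)%nat /\ forall k, Pb b m k b -> (k mod m = 0)%nat.

Lemma Pb_disj b m j k y : goodb b m -> Pb b m j y -> Pb b m k y -> (j mod m = k mod m)%nat.
Proof.
  intros [Hm Hg] Hj Hk.
  destruct (Pb_cover y m b Hm) as [r [_ Hr]].
  pose proof (Hg _ (Pb_trans _ _ _ _ _ _ Hj Hr)) as H1.
  pose proof (Hg _ (Pb_trans _ _ _ _ _ _ Hk Hr)) as H2.
  apply (mod_cancel _ _ r). congruence.
Qed.

Lemma Pb_rebase b c m k y a : goodb b m -> Pb b m a c -> Pb b m (a + k) y -> Pb c m k y.
Proof.
  intros Hg Hc Hy.
  destruct (Pb_cover c m b (proj1 Hg)) as [r [_ Hr]].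
  pose proof (Pb_trans _ _ _ _ _ _ Hr Hy) as H1.
  pose proof (Pb_trans _ _ _ _ _ _ Hc Hr) as H2.
  pose proof (proj2 Hg _ H2) as H3.
  apply (Pb_mod _ _ (r + (a + k))); auto.
  replace (r + (a + k))%nat with (k + (a + r))%nat by lia.
  rewrite Nat.Div0.add_mod, H3, Nat.add_0_r, Nat.Div0.mod_mod. reflexivity.
Qed.

Lemma good_base b c m : goodb b m -> goodb c m.
Proof.
  intros Hg. split; [apply Hg|]. intros k Hk.
  destruct (Pb_cover b m c (proj1 Hg)) as [a [_ Ha]].
  pose proof (Pb_trans _ _ _ _ _ _ Ha Hk) as H1.
  pose proof (Pb_disj _ _ _ _ _ Hg H1 Ha) as H2.
  rewrite <- (Nat.add_0_r a) in H2 at 2. rewrite !(Nat.add_comm a) in H2.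
  apply mod_cancel in H2. rewrite H2. apply Nat.Div0.mod_0_l.
Qed.


Lemma Pb_open b m k y : goodb b m -> Pb b m k y ->
  exists del, del > 0 /\ forall z, d y z < del -> Pb b m k z.
Proof.
  intros Hg Hy.
  destruct (finite_min m (fun j e => forall z, d y z < e -> Pb b m j z -> (j mod m = k mod m)%nat))
    as [e [He Hall]].
  - intros j e e' H [H1 H2] z Hz. apply H. lra.
  - intros j Hj. destruct (classic (j mod m = k mod m)%nat) as [Heq|Hne].
    + exists 1. split; [lra|]. auto.
    + assert (Hnot : ~ Pb b m j y) by (intro Hc; apply Hne; eapply Pb_disj; eauto).
      apply NNPP. intro Hc. apply Hnot. apply Pb_closed. intros eps Heps.
      apply NNPP. intro Hc2. apply Hc. exists eps. split; [exact Heps|].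
      intros z Hz HPz. exfalso. apply Hc2. exists z. split; auto. rewrite dsym; auto.
  - exists e. split; auto. intros z Hz.
    destruct (Pb_cover b m z (proj1 Hg)) as [j [Hj HPj]].
    apply (Pb_mod _ _ j); auto. apply (Hall j Hj z Hz HPj).
Qed.

Lemma Pb_mult b m k : Pb b m k b -> forall a, Pb b m (k * a) b.
Proof.
  intros H a. induction a as [|a IH].
  - rewrite Nat.mul_0_r. destruct (H 1 ltac:(lra)) as [s _].
    apply (Pb_iter b m 0 s 0). reflexivity.
  - replace (k * S a)%nat with (k + k * a)%nat by lia. eapply Pb_trans; eauto.
Qed.

Lemma reduce : forall m, (m >= 1)%nat -> forall b, exists e, goodb b e /\ Nat.divide e m /\
  forall y, Pb b e 0 y -> Pb b m 0 y.
Proof.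
  intro m. induction m as [m IH] using (well_founded_induction lt_wf). intros Hm b.
  destruct (classic (goodb b m)) as [Hg|Hng].
  { exists m. split; auto. split. exists 1%nat. lia. auto. }
  assert (Hex : exists k, Pb b m k b /\ (k mod m <> 0)%nat).
  { apply NNPP. intro Hc. apply Hng. split; auto. intros k Hk.
    apply NNPP. intro Hk2. apply Hc. exists k. auto. }
  destruct Hex as [k0 [Hk0 Hk0m]].
  set (k := (k0 mod m)%nat).
  assert (Hk : Pb b m k b). { apply (Pb_mod _ _ k0); auto. unfold k. rewrite Nat.Div0.mod_mod. auto. }
  assert (Hkm : (k < m)%nat) by (apply Nat.mod_upper_bound; lia).
  assert (Hkpos : (0 < k)%nat) by (unfold k; lia).
  set (g := Nat.gcd k m).
  assert (Hgk : Nat.divide g k) by apply Nat.gcd_divide_l.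
  assert (Hgm : Nat.divide g m) by apply Nat.gcd_divide_r.
  assert (Hgle : (g <= k)%nat) by (apply Nat.divide_pos_le; auto).
  assert (Hgpos : (g >= 1)%nat).
  { destruct (Nat.eq_dec g 0) as [E|E]; [|lia]. apply Nat.gcd_eq_0_l in E. lia. }
  assert (Hg : Pb b m g b).
  { destruct (Nat.gcd_bezout_pos k m Hkpos) as [a [c Hac]].
    apply (Pb_mod _ _ (k * a)). 2: apply Pb_mult; auto.
    rewrite Nat.mul_comm, Hac, Nat.Div0.mod_add. reflexivity. }
  assert (Hincl : forall y, Pb b g 0 y -> Pb b m 0 y).
  { intros y Hy. apply Pb_closed. intros eps Heps.
    destruct (Hy eps Heps) as [s [t [Ht Hdt]]].
    exists (iterF f s t b). split; auto.
    destruct Hgm as [w Hw].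
    rewrite Nat.Div0.mod_0_l in Ht.
    assert (Htq : t = (g * (t / g))%nat).
    { pose proof (Nat.div_mod_eq t g). lia. }
    set (q := (t / g)%nat) in *.
    assert (Hw1 : (w >= 1)%nat) by (destruct w; lia).
    apply (Pb_mod _ _ (g * (q * (w - 1)) + t)).
    - rewrite Nat.Div0.mod_0_l.
      replace (g * (q * (w - 1)) + t)%nat with (0 + q * m)%nat.
      + rewrite Nat.Div0.mod_add. apply Nat.Div0.mod_0_l.
      + rewrite Htq, Hw. destruct w as [|w']; [lia|]. replace (S w' - 1)%nat with w' by lia. nia.
    - apply Pb_fwd. apply Pb_mult. exact Hg. }
  destruct (IH g ltac:(lia) Hgpos b) as [e [He1 [He2 He3]]].
  exists e. split; auto. split.
  - eapply Nat.divide_trans; eauto.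
  - intros y Hy. apply Hincl, He3, Hy.
Qed.

Lemma good_lcm b a c : goodb b a -> goodb b c -> goodb b (Nat.lcm a c).
Proof.
  intros [Ha Hga] [Hc Hgc]. split.
  - destruct (Nat.eq_dec (Nat.lcm a c) 0) as [E|E]; [|lia]. apply Nat.lcm_eq_0 in E. lia.
  - intros k Hk. apply Nat.Lcm0.mod_divide. apply Nat.lcm_least.
    + apply Nat.Lcm0.mod_divide. apply Hga. eapply Pb_coarsen; [|exact Hk]. apply Nat.divide_lcm_l.
    + apply Nat.Lcm0.mod_divide. apply Hgc. eapply Pb_coarsen; [|exact Hk]. apply Nat.divide_lcm_r.
Qed.

Lemma good_div b D a : goodb b D -> Nat.divide a D -> (a >= 1)%nat -> goodb b a.
Proof.
  intros [HD Hg] Hdv Ha. split; auto. intros k Hk.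
  destruct (pigeon D (fun j e => (j mod a = k mod a)%nat /\
     exists (s : nat -> L) t, (t mod D = j)%nat /\ d (iterF f s t b) b < e)) as [j [Hj Hq]].
  - intros j e e' [H1 [s [t [H2 H3]]]] Hle. split; auto. exists s, t. split; auto. lra.
  - intros e He. destruct (Hk e He) as [s [t [Ht Hdt]]].
    exists (t mod D)%nat. split. apply Nat.mod_upper_bound; lia.
    split. rewrite modmod_div; auto. exists s, t. auto.
  - assert (HP : Pb b D j b).
    { intros e He. destruct (Hq e He) as [_ [s [t [H1 H2]]]]. exists s, t. split; auto.
      rewrite H1, Nat.mod_small; auto. }
    apply Hg in HP. rewrite Nat.mod_small in HP by auto. subst j.
    destruct (Hq 1 ltac:(lra)) as [H1 _]. rewrite <- H1. apply Nat.Div0.mod_0_l.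
Qed.



Lemma closedball x n eps m :
  (forall i (s : nat -> L), d (iterF f s (n * i) x) x < eps) -> Nat.divide n m ->
  forall y, Pb x m 0 y -> d y x <= eps.
Proof.
  intros Hn [w Hw] y Hy. apply Rnot_lt_le. intro Hlt.
  destruct (Hy (d y x - eps) ltac:(lra)) as [s [t [Ht Hdt]]].
  rewrite Nat.Div0.mod_0_l in Ht.
  assert (Et : t = (n * (w * (t / m)))%nat).
  { pose proof (Nat.div_mod_eq t m). rewrite Ht in H. rewrite Hw in H at 2. rewrite H at 1. rewrite Hw. lia. }
  specialize (Hn (w * (t / m))%nat s). rewrite <- Et in Hn.
  pose proof (dtri y (iterF f s t x) x). rewrite (dsym y (iterF f s t x)) in H. lra.
Qed.

Variable x0 : X.
Hypothesis Hrr0 : regularly_recurrent d f x0.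
Hypothesis Hnp : ~ periodic_point f x0.
Variable lam0 : L.
Hypothesis Hcpt : compact_space d.

Lemma step E : goodb x0 E -> exists E', goodb x0 E' /\ Nat.divide E E' /\ (E < E')%nat.
Proof.
  intros HE. pose proof (proj1 HE) as HE1.
  set (s0 := fun _ : nat => lam0).
  set (y1 := iterF f s0 E x0).
  assert (Hdel : d y1 x0 > 0).
  { destruct (Rle_lt_or_eq_dec 0 (d y1 x0) (dpos _ _)) as [H|H]; [lra|].
    exfalso. apply Hnp. exists s0, E. split; auto. apply (metric_eq0 d Hd). auto. }
  destruct (Hrr0 (d y1 x0 / 2) ltac:(lra)) as [n [Hn1 Hn]].
  assert (Hn' : forall i (s : nat -> L), d (iterF f s (n * i) x0) x0 < d y1 x0 / 2).
  { intros i s. apply Hn. }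
  destruct (reduce (E * n)%nat ltac:(nia) x0) as [e [He1 [He2 He3]]].
  exists (Nat.lcm E e). split; [apply good_lcm; auto|]. split; [apply Nat.divide_lcm_l|].
  assert (Hpos : (Nat.lcm E e >= 1)%nat) by (apply (good_lcm x0 E e HE He1)).
  assert (Hle : (E <= Nat.lcm E e)%nat) by (apply Nat.divide_pos_le; [lia|apply Nat.divide_lcm_l]).
  destruct (Nat.eq_dec E (Nat.lcm E e)) as [Eq|Neq]; [|lia].
  exfalso.
  assert (Hediv : Nat.divide e E) by (rewrite Eq; apply Nat.divide_lcm_r).
  assert (Hy1 : Pb x0 e 0 y1).
  { apply Pb_iter. rewrite Nat.Div0.mod_0_l. apply Nat.Lcm0.mod_divide. exact Hediv. }
  apply He3 in Hy1.
  pose proof (closedball x0 n _ (E * n)%nat Hn' ltac:(exists E; reflexivity) y1 Hy1). lra.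
Qed.

Lemma step2 j E : goodb x0 E -> exists E', goodb x0 E' /\ Nat.divide E E' /\ (E < E')%nat /\
  (goodb x0 j -> Nat.divide j E').
Proof.
  intro HE. destruct (classic (goodb x0 j)) as [Hj|Hj].
  - destruct (step (Nat.lcm E j) (good_lcm _ _ _ HE Hj)) as [E' [H1 [H2 H3]]].
    exists E'. split; auto. split. eapply Nat.divide_trans; [apply Nat.divide_lcm_l|exact H2].
    split. pose proof (Nat.divide_pos_le E (Nat.lcm E j) ltac:(pose proof (proj1 (good_lcm _ _ _ HE Hj)); lia)
      (Nat.divide_lcm_l E j)). lia.
    intros _. eapply Nat.divide_trans; [apply Nat.divide_lcm_r|exact H2].
  - destruct (step E HE) as [E' [H1 [H2 H3]]]. exists E'. tauto.
Qed.

Definition nxt (j E : nat) : nat := epsilon (inhabits 0%nat) (fun E' => goodb x0 E ->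
  goodb x0 E' /\ Nat.divide E E' /\ (E < E')%nat /\ (goodb x0 j -> Nat.divide j E')).

Fixpoint Dch (j : nat) : nat := match j with O => 1%nat | S j => nxt j (Dch j) end.

Lemma good1 : goodb x0 1.
Proof. split; auto. Qed.

Lemma nxt_spec j E : goodb x0 E -> goodb x0 (nxt j E) /\ Nat.divide E (nxt j E) /\ (E < nxt j E)%nat /\
  (goodb x0 j -> Nat.divide j (nxt j E)).
Proof.
  intro HE. unfold nxt. apply (epsilon_spec (inhabits 0%nat) (fun E' => goodb x0 E ->
    goodb x0 E' /\ Nat.divide E E' /\ (E < E')%nat /\ (goodb x0 j -> Nat.divide j E'))); auto.
  destruct (step2 j E HE) as [E' HE']. exists E'. auto.
Qed.

Lemma Dch_prop j : goodb x0 (Dch j) /\ Nat.divide (Dch j) (Dch (S j)) /\ (Dch j < Dch (S j))%nat /\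
  (goodb x0 j -> Nat.divide j (Dch (S j))).
Proof.
  assert (Hg : forall j, goodb x0 (Dch j)).
  { induction j0 as [|j0 IH]. apply good1. simpl. apply nxt_spec. auto. }
  split; auto. simpl. apply nxt_spec. auto.
Qed.


Lemma Dch_mono j k : (j <= k)%nat -> Nat.divide (Dch j) (Dch k).
Proof.
  intro H. induction H. apply Nat.divide_refl.
  eapply Nat.divide_trans; [exact IHle|]. apply Dch_prop.
Qed.

Lemma Dch_pos j : (Dch j >= 1)%nat.
Proof. apply (proj1 (Dch_prop j)). Qed.

Definition pf (n : nat) : nat :=
  epsilon (inhabits 0%nat) (fun p => (n >= 2)%nat -> is_prime_nat p /\ Nat.divide p n).

Lemma pf_spec n : (n >= 2)%nat -> is_prime_nat (pf n) /\ Nat.divide (pf n) n.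
Proof.
  intro Hn. unfold pf. apply (epsilon_spec (inhabits 0%nat) (fun p => (n >= 2)%nat -> is_prime_nat p /\ Nat.divide p n)); auto.
  destruct (ex_prime_div n Hn) as [p Hp]. exists p. auto.
Qed.

Fixpoint st (N : nat) : nat * nat :=
  match N with
  | O => (1%nat, 0%nat)
  | S N => let (M, j) := st N in
           let p := pf (Dch (S j) / M) in
           if Nat.eqb (M * p) (Dch (S j)) then ((M * p)%nat, S j) else ((M * p)%nat, j)
  end.

Definition alph (N : nat) : nat := pf (Dch (S (snd (st N))) / fst (st N)).

Lemma st_S N : fst (st (S N)) = (fst (st N) * alph N)%nat /\
  (if Nat.eqb (fst (st (S N))) (Dch (S (snd (st N)))) then snd (st (S N)) = S (snd (st N))
   else snd (st (S N)) = snd (st N)).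
Proof.
  unfold alph. cbn [st]. destruct (st N) as [M j]. cbn [fst snd].
  destruct (Nat.eqb (M * pf (Dch (S j) / M)) (Dch (S j))) eqn:E; cbn [fst snd]; rewrite E; auto.
Qed.

Lemma st_inv N : Nat.divide (Dch (snd (st N))) (fst (st N)) /\ Nat.divide (fst (st N)) (Dch (S (snd (st N)))) /\
  (fst (st N) < Dch (S (snd (st N))))%nat /\ (fst (st N) >= 1)%nat.
Proof.
  induction N as [|N IH].
  - cbn [st fst snd]. split. exists 1%nat. reflexivity. split. exists (Dch 1). lia.
    pose proof (Dch_prop 0) as H. destruct H as [_ [_ [H _]]]. change (Dch 0) with 1%nat in H. split; lia.
  - destruct IH as [H1 [H2 [H3 H4]]]. destruct (st_S N) as [E1 E2].
    set (M := fst (st N)) in *. set (j := snd (st N)) in *.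
    destruct H2 as [q Hq].
    assert (Hq2 : (q >= 2)%nat) by nia.
    assert (Hdq : (Dch (S j) / M = q)%nat) by (rewrite Hq; apply Nat.div_mul; lia).
    destruct (pf_spec q Hq2) as [Hp [w Hw]]. pose proof (prime_ge2 _ Hp).
    assert (Ha : alph N = pf q) by (unfold alph; fold j M; rewrite Hdq; reflexivity).
    assert (HMd : Nat.divide (fst (st (S N))) (Dch (S j))).
    { rewrite E1, Ha. exists w. rewrite Hq. rewrite Hw at 1. ring. }
    destruct (Nat.eqb (fst (st (S N))) (Dch (S j))) eqn:Eb.
    + apply Nat.eqb_eq in Eb. rewrite E2. rewrite Eb.
      destruct (Dch_prop (S j)) as [_ [HH1 [HH2 _]]].
      split. apply Nat.divide_refl. split. auto. split. auto. pose proof (Dch_pos (S j)). lia.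
    + apply Nat.eqb_neq in Eb. rewrite E2.
      assert (Hpos : (fst (st (S N)) >= 1)%nat) by (rewrite E1; nia).
      split. { eapply Nat.divide_trans; [exact H1|]. rewrite E1. apply Nat.divide_factor_l. }
      split. auto. split; auto.
      pose proof (Nat.divide_pos_le _ (Dch (S j)) ltac:(pose proof (Dch_pos (S j)); lia) HMd). lia.
Qed.

Lemma alph_prime N : is_prime_nat (alph N).
Proof.
  destruct (st_inv N) as [_ [[q Hq] [H3 H4]]]. unfold alph.
  rewrite Hq. rewrite Nat.div_mul by lia. apply pf_spec. nia.
Qed.

Lemma alph_ge2 N : (alph N >= 2)%nat.
Proof. apply prime_ge2, alph_prime. Qed.

Lemma st_Mp N : fst (st N) = Mp alph N.
Proof.
  induction N as [|N IH]. reflexivity.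
  destruct (st_S N) as [E _]. rewrite E, IH. reflexivity.
Qed.

Definition Mx N := Mp alph N.

Lemma Mx_pos N : (Mx N >= 1)%nat.
Proof. apply Mp_pos. intro i. pose proof (alph_ge2 i). lia. Qed.

Lemma Mx_good N : goodb x0 (Mx N).
Proof.
  destruct (st_inv N) as [_ [H2 _]]. rewrite st_Mp in H2.
  eapply good_div; [apply (proj1 (Dch_prop (S (snd (st N)))))|exact H2|apply Mx_pos].
Qed.

Lemma snd_mono N : (snd (st N) <= snd (st (S N)))%nat.
Proof.
  destruct (st_S N) as [_ E]. destruct (Nat.eqb _ _); rewrite E; lia.
Qed.

Lemma snd_reach j : exists N, (snd (st N) >= j)%nat.
Proof.
  induction j as [|j [N0 HN0]].
  - exists 0%nat. lia.
  - destruct (Nat.eq_dec (snd (st N0)) j) as [Eq|Ne]; [|exists N0; lia].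
    assert (Hcl : forall K, (snd (st (N0 + K)) >= S j)%nat \/
        (snd (st (N0 + K)) = j /\ (fst (st (N0 + K)) >= K)%nat)).
    { induction K as [|K IH].
      - right. rewrite Nat.add_0_r. split; auto. lia.
      - rewrite Nat.add_succ_r. destruct IH as [IH|[IH1 IH2]].
        + left. pose proof (snd_mono (N0 + K)). lia.
        + destruct (st_S (N0 + K)) as [E1 E2]. pose proof (alph_ge2 (N0 + K)).
          pose proof (proj2 (proj2 (proj2 (st_inv (N0 + K))))).
          destruct (Nat.eqb _ _); rewrite IH1 in E2.
          * left. lia.
          * right. split; auto. rewrite E1. nia. }
    destruct (Hcl (Dch (S j))) as [H|[H1 H2]].
    + exists (N0 + Dch (S j))%nat. lia.
    + exfalso. pose proof (proj1 (proj2 (proj2 (st_inv (N0 + Dch (S j)))))). rewrite H1 in H. lia.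
Qed.

Lemma cofinal j : exists N, Nat.divide (Dch j) (Mx N).
Proof.
  destruct (snd_reach j) as [N HN]. exists N.
  eapply Nat.divide_trans. apply (Dch_mono j (snd (st N)) HN).
  unfold Mx. rewrite <- st_Mp. apply (st_inv N).
Qed.

Definition KM N x : nat := epsilon (inhabits 0%nat) (fun k => (k < Mx N)%nat /\ Pb x0 (Mx N) k x).

Lemma KM_spec N x : (KM N x < Mx N)%nat /\ Pb x0 (Mx N) (KM N x) x.
Proof.
  unfold KM. apply (epsilon_spec (inhabits 0%nat) (fun k => (k < Mx N)%nat /\ Pb x0 (Mx N) k x)).
  apply Pb_cover. apply Mx_pos.
Qed.

Lemma KM_uniq N x k : (k < Mx N)%nat -> Pb x0 (Mx N) k x -> KM N x = k.
Proof.
  intros Hk HP. destruct (KM_spec N x) as [H1 H2].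
  pose proof (Pb_disj _ _ _ _ _ (Mx_good N) H2 HP). rewrite !Nat.mod_small in H; auto.
Qed.

Lemma KM_cons N x : KM N x = (KM (S N) x mod Mx N)%nat.
Proof.
  apply KM_uniq. apply Nat.mod_upper_bound. pose proof (Mx_pos N). lia.
  apply (Pb_mod _ _ (KM (S N) x)). rewrite Nat.Div0.mod_mod. reflexivity.
  apply (Pb_coarsen _ _ (Mx (S N))). exists (alph N). unfold Mx. simpl. lia.
  apply KM_spec.
Qed.

Lemma KM_fwd N x lam : KM N (f lam x) = ((KM N x + 1) mod Mx N)%nat.
Proof.
  apply KM_uniq. apply Nat.mod_upper_bound. pose proof (Mx_pos N). lia.
  apply (Pb_mod _ _ (S (KM N x))). rewrite Nat.Div0.mod_mod. f_equal. lia.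
  apply Pb_fwd1. apply KM_spec.
Qed.



Definition piX (x : X) (i : nat) : nat := (KM (S i) x / Mx i)%nat.

Lemma KM_dec x i : KM (S i) x = (piX x i * Mx i + KM i x)%nat.
Proof.
  unfold piX. pose proof (KM_cons i x). pose proof (Nat.div_mod_eq (KM (S i) x) (Mx i)). lia.
Qed.

Lemma KM_0 x : KM 0 x = 0%nat.
Proof. pose proof (proj1 (KM_spec 0 x)). unfold Mx in H. simpl in H. lia. Qed.

Lemma KM_down N x y : KM N y = KM N x -> forall n, (n <= N)%nat -> KM n y = KM n x.
Proof.
  intros H n Hn.
  assert (Hs : forall k, KM (n + k) y = KM (n + k) x -> KM n y = KM n x).
  { induction k as [|k IH]; intro Hk. rewrite Nat.add_0_r in Hk. auto.
    apply IH. rewrite (KM_cons (n + k) y), (KM_cons (n + k) x).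
    rewrite Nat.add_succ_r in Hk. rewrite Hk. reflexivity. }
  apply (Hs (N - n)%nat). replace (n + (N - n))%nat with N by lia. auto.
Qed.

Lemma list_max_in (l : list nat) N : In N l -> (N <= fold_right Nat.max 0 l)%nat.
Proof. induction l as [|a l IH]; simpl; [tauto|]. intros [->|H]; [lia|]. specialize (IH H). lia. Qed.

Lemma main : exists (alpha : nat -> nat) (pi : X -> nat -> nat),
    (forall i, is_prime_nat (alpha i)) /\
    (forall x, in_Delta alpha (pi x)) /\
    continuous_map d d_alpha pi /\
    (forall r, in_Delta alpha r -> exists x, pi x = r) /\
    (forall lam x, g_alpha alpha (pi x) = pi (f lam x)) /\
    (forall x, regularly_recurrent d f x -> forall y, pi y = pi x -> y = x).
Proof.
  exists alph, piX. split; [apply alph_prime|]. split; [|split; [|split; [|split]]].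
  -
    intros x i. unfold piX. apply Nat.Div0.div_lt_upper_bound.
    pose proof (proj1 (KM_spec (S i) x)). unfold Mx in *. simpl in H. lia.
  -
    intros x eps He. destruct (half_pow_small eps He) as [N HN].
    destruct (Pb_open x0 (Mx N) (KM N x) x (Mx_good N) (proj2 (KM_spec N x))) as [del [Hdel Hb]].
    exists del. split; auto. intros y Hy.
    assert (Hk : KM N y = KM N x) by (apply KM_uniq; [apply KM_spec|apply Hb; exact Hy]).
    eapply Rle_lt_trans; [|exact HN]. apply dalpha_bound. intros i Hi.
    unfold piX. rewrite (KM_down N y x); auto; lia.
  -
    intros r Hr.
    set (Kr := fix Kr (N : nat) : nat := match N with O => O | S N => (Kr N + r N * Mx N)%nat end).
    assert (HKr : forall N, (Kr N < Mx N)%nat).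
    { induction N as [|N IH]. simpl. unfold Mx. simpl. lia.
      change (Kr (S N)) with (Kr N + r N * Mx N)%nat. change (Mx (S N)) with (Mx N * alph N)%nat. specialize (Hr N).
      assert (r N * Mx N <= (alph N - 1) * Mx N)%nat by (apply Nat.mul_le_mono_r; lia).
      pose proof (alph_ge2 N). destruct (alph N) as [|a]; [lia|]. replace (S a - 1)%nat with a in * by lia. nia. }
    set (C := fun N y => Pb x0 (Mx N) (Kr N) y).
    assert (Hnest1 : forall N y, C (S N) y -> C N y).
    { intros N y H. unfold C in *. apply (Pb_mod _ _ (Kr (S N))).
      - simpl. rewrite Nat.Div0.mod_add. reflexivity.
      - apply (Pb_coarsen _ _ (Mx (S N))); auto. exists (alph N). unfold Mx. simpl. lia. }
    assert (Hnest : forall N N' y, (N <= N')%nat -> C N' y -> C N y).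
    { intros N N' y Hle. induction Hle; auto. }
    assert (Hne : forall N, exists y, C N y).
    { intro N. exists (iterF f (fun _ => lam0) (Kr N) x0). apply Pb_iter. reflexivity. }
    assert (Hex : exists x, forall N, C N x).
    { apply NNPP. intro Hc.
      destruct (Hcpt nat (fun N y => ~ C N y)) as [l Hl].
      - intros N x Hx. apply NNPP. intro Ho. apply Hx. apply Pb_closed. intros eps Heps.
        apply NNPP. intro Hc2. apply Ho. exists eps. split; auto. intros y Hy Hcy.
        apply Hc2. exists y. split; auto. rewrite dsym. auto.
      - intro x. apply NNPP. intro Hc2. apply Hc. exists x. intro N. apply NNPP. intro Hc3.
        apply Hc2. exists N. auto.
      - destruct (Hne (fold_right Nat.max 0 l)%nat) as [z Hz].
        destruct (Hl z) as [N [HN1 HN2]]. apply HN2. eapply Hnest; [|exact Hz].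
        apply list_max_in. auto. }
    destruct Hex as [x Hx]. exists x.
    assert (HK : forall N, KM N x = Kr N) by (intro N; apply KM_uniq; auto; apply Hx).
    apply functional_extensionality. intro i. unfold piX. rewrite HK. simpl.
    rewrite Nat.add_comm, Nat.div_add_l by (pose proof (Mx_pos i); lia).
    rewrite Nat.div_small by auto. lia.
  -
    intros lam x. apply functional_extensionality. intro i.
    unfold piX, Mx. apply (odo_step alph (fun N => KM N x)) with (K' := fun N => KM N (f lam x)).
    + apply alph_ge2.
    + intro N. apply KM_spec.
    + intro N. apply KM_cons.
    + intro N. apply KM_fwd.
  -
    intros x Hrx y Hxy.
    assert (HKall : forall N, KM N y = KM N x).
    { induction N as [|N IH]. rewrite !KM_0. auto.
      rewrite !KM_dec, IH, Hxy. reflexivity. }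
    assert (Hle : forall eps, eps > 0 -> d y x <= eps).
    { intros eps He. destruct (Hrx eps He) as [n [Hn1 Hn]].
      destruct (reduce n Hn1 x) as [e [He1 [He2 He3]]].
      assert (Hg0 : goodb x0 e) by (eapply good_base; eauto).
      destruct (cofinal (S e)) as [N HN].
      assert (HeN : Nat.divide e (Mx N)).
      { eapply Nat.divide_trans; [|exact HN]. apply (Dch_prop e). auto. }
      set (k := KM N x).
      assert (Hy : Pb x0 e (k + 0) y).
      { rewrite Nat.add_0_r. apply (Pb_coarsen _ _ (Mx N)); auto. unfold k. rewrite <- HKall. apply KM_spec. }
      assert (Hx : Pb x0 e k x) by (apply (Pb_coarsen _ _ (Mx N)); auto; apply KM_spec).
      pose proof (Pb_rebase x0 x e 0 y k Hg0 Hx Hy) as Hy'.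
      apply He3 in Hy'.
      apply (closedball x n eps n Hn (Nat.divide_refl n) y Hy'). }
    apply (metric_eq0 d Hd). apply Rle_antisym; [|apply dpos].
    apply Rnot_lt_le. intro Hlt. pose proof (Hle (d y x / 2) ltac:(lra)). lra.
Qed.

End Dyn.

Open Scope R_scope.

Theorem theorem4p6 (X L : Type) (d : X -> X -> R) (f : L -> X -> X)
  (Hd : is_metric d) (Hcpt : compact_space d) (Hinf : infinite_type X)
  (HLfin : finite_type L) (HLne : inhabited L)
  (Hcont : forall lam, continuous_map d d (f lam))
  (Hmin : ifs_minimal d f)
  (Hrr : exists x0, regularly_recurrent d f x0 /\ ~ periodic_point f x0) :
  exists (alpha : nat -> nat) (pi : X -> nat -> nat),
    (forall i, is_prime_nat (alpha i)) /\
    (forall x, in_Delta alpha (pi x)) /\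
    continuous_map d d_alpha pi /\
    (forall r, in_Delta alpha r -> exists x, pi x = r) /\
    (forall lam x, g_alpha alpha (pi x) = pi (f lam x)) /\
    (forall x, regularly_recurrent d f x -> forall y, pi y = pi x -> y = x).
Proof.
  destruct Hrr as [x0 [Hrr0 Hnp]]. destruct HLne as [lam0].
  eapply main; eauto.
Qed.
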